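(* Let $B$ be a Boolean algebra, $d\ge 1$ an integer, and let $a_0,\dots,a_{d+1},b_1,\dots,b_{d+1}\in B$ satisfy $a_0=1$, $a_1\ge a_2\ge\dots\ge a_{d+1}=0$, $b_1\ge b_2\ge\dots\ge b_{d+1}=0$, and $a_i\le b_i$ for all $i$. Then the system in the unknowns $x_1,\dots,x_d\in B$ $$x_1\ge x_2\ge\dots\ge x_d,\qquad \bigvee_{i=0}^{n}(a_{n-i}\wedge x_i)=b_n\quad(n=1,\dots,d+1),$$ where $x_0=1$ and $x_{d+1}=0$ are constants, has at most one solution $(x_1,\dots,x_d)\in B^d$.
   Context: $\ge$ is the lattice order of the Boolean algebra $B$. *)

(* Defs.v *)
(* A Boolean algebra is a complemented distributive lattice
   with top and bottom: MathComp's ctbDistrLatticeType. *)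
From HB Require Import structures.
From mathcomp Require Import all_boot all_order.
Set Implicit Arguments. Unset Strict Implicit. Unset Printing Implicit Defensive.
Import Order.Theory.
Local Open Scope order_scope.

(* Extension of unknowns x_1..x_d (given as x : nat -> T, only values at
   1..d matter) with the constants x_0 = 1 and x_(d+1) = 0 (and 0 beyond). *)
Definition xext {disp : Order.disp_t} {T : ctbDistrLatticeType disp}
  (d : nat) (x : nat -> T) (i : nat) : T :=
  if i == 0%N then \top else if (i <= d)%N then x i else \bot.

Definition is_solution {disp : Order.disp_t} {T : ctbDistrLatticeType disp}
  (d : nat) (a b x : nat -> T) : Prop :=
  (forall i, (1 <= i < d)%N -> x i.+1 <= x i) /\
  (forall n, (1 <= n <= d.+1)%N ->
     \join_(0 <= i < n.+1) (a (n - i)%N `&` xext d x i) = b n).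

(* Main.v *)
Require Import Defs.
From HB Require Import structures.
From mathcomp Require Import all_boot all_order.
Import Order.Theory.
Local Open Scope order_scope.

Section Aux.
Variables (disp : Order.disp_t) (T : ctbDistrLatticeType disp) (d : nat) (a b : nat -> T).
Hypothesis ha0 : a 0%N = \top.
Hypothesis ha : forall i, (1 <= i <= d)%N -> a i.+1 <= a i.
Hypothesis had : a d.+1 = \bot.
Hypothesis hbd : b d.+1 = \bot.

Lemma amon p q : (p <= q)%N -> (q <= d.+1)%N -> a q <= a p.
Proof.
elim: q => [|q IH] hpq hq; first by rewrite leqn0 in hpq; rewrite (eqP hpq).
case: (leqP p q) => h.
  apply: le_trans (IH h (ltnW hq)).
  case: q {IH h hq hpq} (hq) => [|q] hq; first by rewrite ha0; exact: lex1.
  by apply: ha; rewrite /= -ltnS.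
have -> : p = q.+1 by apply/eqP; rewrite eqn_leq hpq h.
by [].
Qed.

Lemma ymon (y : nat -> T) : is_solution d a b y -> forall n i, (1 <= n)%N -> (n <= d)%N -> (n <= i)%N ->
  xext d y i <= y n.
Proof.
move=> [Hy _] n i h1 hd.
elim: i => [|i IH] hni; first by rewrite leqn0 in hni; rewrite (eqP hni) in h1.
case: (leqP n i) => h.
  apply: le_trans (IH h).
  rewrite /xext /=.
  have -> : (i == 0%N) = false by apply/negbTE; rewrite -lt0n (leq_trans h1 h).
  case: ifP => hi; last exact: le0x.
  rewrite (leq_trans (leqnSn i) hi); apply: Hy.
  by rewrite hi (leq_trans h1 h).
have -> : i.+1 = n by apply/eqP; rewrite eqn_leq hni h.
rewrite /xext; have -> : (n == 0%N) = false by apply/negbTE; rewrite -lt0n.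
by rewrite hd.
Qed.

Lemma le_sol x y : is_solution d a b x -> is_solution d a b y ->
  forall n, (1 <= n <= d)%N -> x n <= y n.
Proof.
move=> Hx Hy n /andP[h1 hnd].
have xn : xext d x n = x n.
  rewrite /xext; have -> : (n == 0%N) = false by apply/negbTE; rewrite -lt0n.
  by rewrite hnd.
set c := x n `&` ~` y n.
have key : forall j, (j <= d.+1)%N -> c <= a j.
{ elim => [|j IH] hj; first by rewrite ha0; exact: lex1.
  have cj := IH (ltnW hj).
  suff : c `&` ~` a j.+1 <= \bot by rewrite lex0 disj_leC complK.
  set e := c `&` ~` a j.+1.
  have ec : e <= c by exact: leIl.
  have exn : e <= x n by apply: le_trans ec _; exact: leIl.
  have eyn : e <= ~` y n by apply: le_trans ec _; exact: leIr.
  have eaj : e <= a j by exact: le_trans ec cj.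
  have ena : e <= ~` a j.+1 by exact: leIr.
  case: (leqP (n + j) d.+1) => hm.
  - have hm1 : (1 <= n + j <= d.+1)%N by rewrite hm (leq_trans h1 (leq_addr _ _)).
    have Ex := (Hx.2 _ hm1); have Ey := (Hy.2 _ hm1).
    have eb : e <= b (n + j).
      rewrite -Ex; apply: (@joins_min_seq _ _ _ _ _ _ n).
      - by rewrite mem_index_iota /= ltnS leq_addr.
      - by [].
      by rewrite addKn xn lexI eaj exn.
    have enb : e <= ~` b (n + j).
      rewrite lexC -Ey; apply/joinsP_seq => i; rewrite mem_index_iota /= ltnS => hi _.
      case: (leqP n i) => hni.
        apply: leIxr; apply: le_trans (@ymon y Hy n i h1 hnd hni) _.
        by rewrite lexC.
      apply: leIxl.
      have h2 : (j.+1 <= n + j - i)%N.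
        by rewrite leq_subRL // addnS -addSn leq_add2r.
      have h3 : (n + j - i <= d.+1)%N by exact: leq_trans (leq_subr _ _) hm.
      apply: le_trans (@amon _ _ h2 h3) _.
      by rewrite lexC.
    by rewrite -(meetxC (b (n + j))) lexI eb enb.
  - have hd1 : (1 <= d.+1 <= d.+1)%N by rewrite leqnn.
    have Ex := (Hx.2 _ hd1).
    rewrite -hbd -Ex; apply: (@joins_min_seq _ _ _ _ _ _ n).
    - by rewrite mem_index_iota /= ltnS (leq_trans hnd).
    - by [].
    rewrite xn lexI exn andbT; apply: le_trans eaj _; apply: amon; last exact: ltnW.
    by rewrite leq_subLR ltnW // addnC.
}
have := key d.+1 (leqnn _); rewrite had lex0 => /eqP c0.
by rewrite -(complK (y n)) -disj_leC; apply/eqP.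
Qed.
End Aux.

Theorem mainTheorem9 (disp : Order.disp_t) (T : ctbDistrLatticeType disp)
  (d : nat) (hd : (1 <= d)%N) (a b : nat -> T)
  (ha0 : a 0%N = \top)
  (ha : forall i, (1 <= i <= d)%N -> a i.+1 <= a i)
  (had : a d.+1 = \bot)
  (hb : forall i, (1 <= i <= d)%N -> b i.+1 <= b i)
  (hbd : b d.+1 = \bot)
  (hab : forall i, (1 <= i <= d.+1)%N -> a i <= b i)
  (x y : nat -> T) :
  is_solution d a b x -> is_solution d a b y ->
  forall i, (1 <= i <= d)%N -> x i = y i.
Proof.
move=> Hx Hy i hi; apply/eqP; rewrite eq_le.
by rewrite (@le_sol _ _ _ _ _ ha0 ha had hbd _ _ Hx Hy _ hi) (@le_sol _ _ _ _ _ ha0 ha had hbd _ _ Hy Hx _ hi).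
Qed.
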